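(* Consider a convolutional linear network with lifting operator $\mathcal{A}$ and family of admissible supports $\mathfrak{M}$ as described in the context. Assume $|\mathcal{P}|=1$ and that for all $\mathcal{S},\mathcal{S}'\in\mathfrak{M}$ all the entries of $M_1(\mathbb{1}^{\mathcal{S}_1\cup\mathcal{S}'_1})\cdots M_K(\mathbb{1}^{\mathcal{S}_K\cup\mathcal{S}'_K})$ belong to $\{0,1\}$. Then for all $\mathcal{S},\mathcal{S}'\in\mathfrak{M}$, $\ker\mathcal{A}_{\mathcal{S}\cup\mathcal{S}'}$ is the orthogonal complement of $\mathbb{T}_{\mathcal{S}\cup\mathcal{S}'}$; $\mathcal{A}$ satisfies the Deep-$\mathfrak{M}$-Null Space Property with constants $(\gamma,\rho)=(1,+\infty)$; and the Deep-lower-RIP constant of $\mathcal{A}$ with regard to $\mathfrak{M}$ is $\sigma_{\mathfrak{M}}=\sqrt{N}$.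
   Context: Network: $\mathcal{G}$ is a rooted directed acyclic graph with root $r$ and set of leaves $\mathcal{L}$, edges directed towards the root; $\mathcal{P}$ is the set of all leaf-to-root paths. Every such path has exactly $K$ edges and each edge has a well-defined depth $k\in\{1,\dots,K\}$ (edges ending at the root have depth 1); $\mathcal{E}(k)$ is the set of edges of depth $k$. Signals live in $\mathbb{R}^N$, $*$ denotes convolution on $\mathbb{R}^N$. Each edge $e$ carries a kernel of maximal support $\mathcal{S}_e\subset\{1,\dots,N\}$, with $\sum_{e\in\mathcal{E}(k)}|\mathcal{S}_e|=S$ for every $k$. For each $k$, $\mathbb{N}_S=\{1,\dots,S\}$ is partitioned into blocks, one per $e\in\mathcal{E}(k)$, of size $|\mathcal{S}_e|$, and $\mathcal{T}_e:\mathbb{R}^S\to\mathbb{R}^N$ writes the entries of $h$ in the block of $e$ at the positions $\mathcal{S}_e$. For $\mathbf{h}=(\mathbf{h}_1,\dots,\mathbf{h}_K)\in\mathbb{R}^{S\times K}$, $M_k(\mathbf{h}_k)$ maps signals $(y_v)$ at origin nodes of edges in $\mathcal{E}(k)$ to $(\sum_{e\in\mathcal{E}(k),e:v\to u}\mathcal{T}_e(\mathbf{h}_k)*y_v)_u$ at end nodes; the network is $M_1(\mathbf{h}_1)\cdots M_K(\mathbf{h}_K)\in\mathbb{R}^{N\times N|\mathcal{L}|}$. For $\mathcal{C}\subset\mathbb{N}_S$, $\mathbb{1}^{\mathcal{C}}\in\mathbb{R}^S$ is its indicator vector. Tensors: $\mathbb{R}^{S^K}$ is the space of order-$K$ tensors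 indexed by $\mathbf{i}\in\mathbb{N}_S^K$, with Euclidean norm $\|\cdot\|$; Segre embedding $P(\mathbf{h})_{\mathbf{i}}=\mathbf{h}_{1,\mathbf{i}_1}\cdots\mathbf{h}_{K,\mathbf{i}_K}$; $\mathcal{A}$ is the unique linear map $\mathbb{R}^{S^K}\to\mathbb{R}^{N\times N|\mathcal{L}|}$ with $\mathcal{A}P(\mathbf{h})=M_1(\mathbf{h}_1)\cdots M_K(\mathbf{h}_K)$; matrices carry the Frobenius norm. A support is $\mathcal{S}=(\mathcal{S}_1,\dots,\mathcal{S}_K)$, $\mathcal{S}_k\subset\mathbb{N}_S$; unions are componentwise; $\mathbf{i}\in\mathcal{S}$ means $\mathbf{i}_k\in\mathcal{S}_k$ for all $k$. $\mathbb{R}^{S\times K}_{\mathcal{S}}=\{\mathbf{h}:\mathbf{h}_{k,i}=0\text{ whenever }i\notin\mathcal{S}_k\}$, $\mathbb{T}_{\mathcal{S}}=\{T:T_{\mathbf{i}}=0\text{ whenever }\mathbf{i}\notin\mathcal{S}\}$, $P_{\mathcal{S}}$ the orthogonal projection onto $\mathbb{T}_{\mathcal{S}}$, $\mathcal{A}_{\mathcal{S}}=\mathcal{A}P_{\mathcal{S}}$. $\mathfrak{M}$ is a given finite family of supports. Deep-$\mathfrak{M}$-Null Space Property with constants $(\gamma,\rho)$ ($\rho=+\infty$ allowed): for all $\mathcal{S},\mathcal{S}'\in\mathfrak{M}$, every $T\in P(\mathbb{R}^{S\times K}_{\mathcal{S}})+P(\mathbb{R}^{S\times K}_{\mathcal{S}'})$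 with $\|\mathcal{A}_{\mathcal{S}\cup\mathcal{S}'}T\|\le\rho$ and every $T'\in\ker\mathcal{A}_{\mathcal{S}\cup\mathcal{S}'}$ satisfy $\|T\|\le\gamma\|T-P_{\mathcal{S}\cup\mathcal{S}'}T'\|$. Deep-lower-RIP constant: $\sigma_{\mathfrak{M}}>0$ such that for all $\mathcal{S},\mathcal{S}'\in\mathfrak{M}$ and all $T$ orthogonal to $\ker\mathcal{A}_{\mathcal{S}\cup\mathcal{S}'}$, $\sigma_{\mathfrak{M}}\|P_{\mathcal{S}\cup\mathcal{S}'}T\|\le\|\mathcal{A}_{\mathcal{S}\cup\mathcal{S}'}T\|$. *)

(* Defs.v *)
(* Convolutional linear network with a single leaf-to-root path
   (|P| = 1), i.e. a chain of K edges. *)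
From HB Require Import structures.
From mathcomp Require Import all_boot all_order all_algebra.
Set Implicit Arguments. Unset Strict Implicit. Unset Printing Implicit Defensive.
Import Order.TTheory GRing.Theory Num.Theory.
Local Open Scope ring_scope.

Definition tindex (K S : nat) := {ffun 'I_K -> 'I_S}.
Notation tensor R K S := {ffun tindex K S -> R^o}.

Section Net.
Variables (R : rcfType) (K S N : nat).
Local Notation tindex := (tindex K S).
Local Notation tensor := (tensor R K S).

Definition subord (i j : 'I_N) : 'I_N :=
  Ordinal (ltn_pmod (i + N - j) (leq_ltn_trans (leq0n i) (ltn_ord i))).

(** matrix of y |-> x * y (circular convolution on R^N):  (x*y)_i = sum_j x_(i-j) y_j *)
Definition convmx (x : 'I_N -> R) : 'M[R]_N := \matrix_(i, j) x (subord i j).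

(** kernel writing operator T_e for the (unique) edge of depth k+1:
    the entries of v are written, in order, at the positions of Se k
    (listed increasingly); zero elsewhere *)
Definition getn (v : 'I_S -> R) (n : nat) : R := \sum_(j : 'I_S | val j == n) v j.
Definition Tker (Se : 'I_K -> {set 'I_N}) (k : 'I_K) (v : 'I_S -> R) : 'I_N -> R :=
  fun p => if p \in Se k then getn v (index p (enum (Se k))) else 0.

(** network M_1(h_1) ... M_K(h_K); h_k = column k of h (depth k+1 ~ index k) *)
Definition net (Se : 'I_K -> {set 'I_N}) (h : 'M[R]_(S, K)) : 'M[R]_N :=
  foldr (fun k acc => convmx (Tker Se k (fun i => h i k)) *m acc) 1%:M (enum 'I_K).

Definition segre (h : 'M[R]_(S, K)) : tensor := [ffun i : tindex => \prod_(k < K) h (i k) k].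

Definition supp := {ffun 'I_K -> {set 'I_S}}.
Definition suppU (Sp Sp' : supp) : supp := [ffun k => Sp k :|: Sp' k].
Definition insupp (Sp : supp) (i : tindex) : bool := [forall k, i k \in Sp k].

Definition indic (Sp : supp) : 'M[R]_(S, K) := \matrix_(i, k) (i \in Sp k)%:R.

Definition RS (Sp : supp) (h : 'M[R]_(S, K)) : Prop := forall i k, i \notin Sp k -> h i k = 0.
Definition TS (Sp : supp) (T : tensor) : Prop := forall i, ~~ insupp Sp i -> T i = 0.
Definition projS (Sp : supp) (T : tensor) : tensor :=
  [ffun i => if insupp Sp i then T i else 0].
Definition AS (A : tensor -> 'M[R]_N) (Sp : supp) (T : tensor) : 'M[R]_N := A (projS Sp T).
Definition kerAS (A : tensor -> 'M[R]_N) (Sp : supp) (T : tensor) : Prop := AS A Sp T = 0.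

Definition tdot (T U : tensor) : R := \sum_i T i * U i.
Definition tnorm (T : tensor) : R := Num.sqrt (tdot T T).
Definition mxnorm (M : 'M[R]_N) : R := Num.sqrt (\sum_i \sum_j M i j ^+ 2).
Definition orthC (P : tensor -> Prop) (T : tensor) : Prop := forall U, P U -> tdot T U = 0.

Definition segre_sum (Sp Sp' : supp) (T : tensor) : Prop :=
  exists h h', [/\ RS Sp h, RS Sp' h' & T = segre h + segre h'].

(** Deep-M-NSP with constants (gamma, rho); rho = None stands for +infinity *)
Definition deep_NSP (A : tensor -> 'M[R]_N) (M : {set supp}) (gamma : R) (rho : option R) : Prop :=
  forall Sp Sp', Sp \in M -> Sp' \in M ->
  forall T, segre_sum Sp Sp' T ->
    (match rho with Some r => mxnorm (AS A (suppU Sp Sp') T) <= r | None => True end : Prop) ->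
  forall T', kerAS A (suppU Sp Sp') T' ->
    tnorm T <= gamma * tnorm (T - projS (suppU Sp Sp') T').

Definition deep_lower_RIP (A : tensor -> 'M[R]_N) (M : {set supp}) (sigma : R) : Prop :=
  0 < sigma /\
  forall Sp Sp', Sp \in M -> Sp' \in M ->
  forall T, orthC (kerAS A (suppU Sp Sp')) T ->
    sigma * tnorm (projS (suppU Sp Sp') T) <= mxnorm (AS A (suppU Sp Sp') T).

End Net.

(* Main.v *)
Require Import Defs.
From HB Require Import structures.
From mathcomp Require Import all_boot all_order all_algebra.
From mathcomp Require Import lra.
Set Implicit Arguments. Unset Strict Implicit. Unset Printing Implicit Defensive.
Import Order.TTheory GRing.Theory Num.Theory.
Local Open Scope ring_scope.

Section Help.
Variables (R : rcfType) (K S N : nat) (Se : 'I_K -> {set 'I_N}).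
Hypothesis HN : (0 < N)%N.
Hypothesis HS : forall k, #|Se k| = S.

Definition Mf (f : 'I_N -> 'I_N) : 'M[R]_N := \matrix_(r, j) (r == f j)%:R.
Definition shiftf (p j : 'I_N) : 'I_N := Ordinal (ltn_pmod (p + j) HN).

Lemma subord_eq p r j : (subord r j == p) = (r == shiftf p j).
Proof.
rewrite /subord /shiftf -!val_eqE /=.
have -> : ((r + N - j) %% N == p)%N = ((r + N - j) == p %[mod N])%N.
  by rewrite (modn_small (ltn_ord p)).
rewrite -(eqn_modDr j) subnK; last by rewrite (leq_trans (ltnW (ltn_ord j))) // leq_addl.
by rewrite modnDr modn_small.
Qed.

Lemma convmx_delta (v : 'I_N -> R) p : (forall x, v x = (x == p)%:R) ->
  convmx v = Mf (shiftf p).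
Proof.
move=> Hv; apply/matrixP => r j; rewrite !mxE Hv.
by rewrite subord_eq.
Qed.

Lemma Mf_mul f g : Mf f *m Mf g = Mf (f \o g).
Proof.
apply/matrixP=> r j; rewrite mxE (bigD1 (g j)) //= big1 => [|l nl].
  by rewrite !mxE eqxx mulr1 addr0.
by rewrite !mxE (negbTE nl) mulr0.
Qed.

Definition hmat (i : tindex K S) : 'M[R]_(S, K) := \matrix_(j, k) (j == i k)%:R.
Definition p0 : 'I_N := Ordinal HN.
Definition pk k (i : tindex K S) := nth p0 (enum (Se k)) (i k).

Lemma getn_hmat i k n : getn (fun j => hmat i j k) n = (val (i k) == n)%:R.
Proof.
rewrite /getn big_mkcond (bigD1 (i k)) //= big1.
  by rewrite /hmat mxE eqxx addr0; case: eqP.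
by move=> j nj; rewrite /hmat mxE (negbTE nj); case: ifP.
Qed.

Lemma Tker_hmat i k x : Tker Se k (fun j => hmat i j k) x = (x == pk k i)%:R.
Proof.
have szk : (i k < size (enum (Se k)))%N by rewrite -cardE HS ltn_ord.
rewrite /Tker; case: ifP => xin.
  rewrite getn_hmat.
  have -> : (val (i k) == index x (enum (Se k))) = (x == pk k i); last by [].
  apply/idP/idP => [/eqP E|/eqP ->].
    by rewrite /pk E nth_index // mem_enum.
  by rewrite /pk index_uniq // enum_uniq.
have : pk k i \in Se k by rewrite -mem_enum mem_nth.
move=> pin; have /negbTE-> // : x != pk k i.
by apply/eqP => E; rewrite E pin in xin.
Qed.

Definition Fnet (i : tindex K S) : 'I_N -> 'I_N :=
  foldr (fun k f => shiftf (pk k i) \o f) id (enum 'I_K).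

Lemma net_hmat i : net Se (hmat i) = Mf (Fnet i).
Proof.
rewrite /net /Fnet; elim: (enum 'I_K) => [|k s IH] /=.
  by apply/matrixP => r j; rewrite !mxE.
by rewrite IH (convmx_delta (Tker_hmat i k)) Mf_mul.
Qed.

Lemma prod_bool (b : 'I_K -> bool) : \prod_(k < K) ((b k)%:R : R) = [forall k, b k]%:R.
Proof.
case: (boolP [forall k, b k]) => [/forallP H|/forallPn [k nk]].
  by rewrite big1 // => k _; rewrite H.
by rewrite (bigD1 k) //= (negbTE nk) mul0r.
Qed.

Definition et (i : tindex K S) : tensor R K S := [ffun x => (x == i)%:R].

Lemma segre_hmat i : segre (hmat i) = et i.
Proof.
apply/ffunP => x; rewrite !ffunE.
under eq_bigr do rewrite mxE.
rewrite prod_bool; congr ((nat_of_bool _)%:R).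
apply/idP/idP => [/forallP H|/eqP->]; last by apply/forallP => k.
by apply/eqP/ffunP => k; apply/eqP/H.
Qed.

Lemma tscaleE (c : R) (f : tensor R K S) x : (c *: f) x = c * f x.
Proof. by rewrite /GRing.scale /= ffunE. Qed.

Lemma decomp (T : tensor R K S) : T = \sum_i T i *: et i.
Proof.
apply/ffunP => x; rewrite sum_ffunE (bigD1 x) //= big1 => [|i ni].
  by rewrite tscaleE ffunE eqxx mulr1 addr0.
by rewrite tscaleE ffunE eq_sym (negbTE ni) mulr0.
Qed.


Variable A : {linear tensor R K S -> 'M[R]_N}.
Hypothesis HA : forall h : 'M[R]_(S, K), A (segre h) = net Se h.

Lemma A_entry T r j : A T r j = \sum_i T i * (r == Fnet i j)%:R.
Proof.
rewrite {1}(decomp T) linear_sum summxE; apply: eq_bigr => i _.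
by rewrite linearZ -segre_hmat HA net_hmat !mxE.
Qed.

Lemma segre_indic (U : supp K S) : segre (indic R U) = [ffun i => (insupp U i)%:R].
Proof.
apply/ffunP => x; rewrite !ffunE.
under eq_bigr do rewrite mxE.
by rewrite prod_bool.
Qed.

Lemma disj (U : supp K S) : (forall r j, net Se (indic R U) r j \in [:: 0; 1]) ->
  forall i i' j, insupp U i -> insupp U i' -> Fnet i j = Fnet i' j -> i = i'.
Proof.
move=> H i i' j Ui Ui' E; apply/eqP; apply: contraT => ne.
have := H (Fnet i j) j; rewrite -HA A_entry segre_indic.
rewrite (bigD1 i) //= (bigD1 i') /=; last by rewrite eq_sym ne.
rewrite !ffunE Ui Ui' E eqxx !mulr1.
set rest := \sum_(x | _) _.
have r0 : 0 <= rest.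
  by apply: sumr_ge0 => x _; rewrite ffunE mulr_ge0 ?ler0n.
have t1 : (true%:R : R) = 1 by [].
rewrite t1 !inE => /orP[]/eqP; lra.
Qed.


Lemma entry_proj (U : supp K S) (T : tensor R K S) i j :
  (forall i i' j, insupp U i -> insupp U i' -> Fnet i j = Fnet i' j -> i = i') ->
  insupp U i -> A (projS U T) (Fnet i j) j = T i.
Proof.
move=> D Ui; rewrite A_entry (bigD1 i) //= big1.
  by rewrite ffunE Ui eqxx mulr1 addr0.
move=> x nx; rewrite ffunE; case: ifP => Ux; last by rewrite mul0r.
case: eqP => [E|_]; last by rewrite mulr0.
by move: nx; rewrite (D _ _ _ Ux Ui (esym E)) eqxx.
Qed.

Lemma ker_char (U : supp K S) (T : tensor R K S) :
  (forall i i' j, insupp U i -> insupp U i' -> Fnet i j = Fnet i' j -> i = i') ->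
  kerAS A U T <-> (forall i, insupp U i -> T i = 0).
Proof.
move=> D; split.
  move=> H i Ui; rewrite -(entry_proj T p0 D Ui).
  by move: H; rewrite /kerAS /AS => ->; rewrite mxE.
move=> H; rewrite /kerAS /AS.
have -> : projS U T = 0.
  by apply/ffunP => x; rewrite !ffunE; case: ifP => // Ux; rewrite H.
exact: linear0.
Qed.

Lemma orth_char (U : supp K S) (T : tensor R K S) :
  orthC (TS U) T <-> (forall i, insupp U i -> T i = 0).
Proof.
split.
  move=> H i Ui; have := H (et i).
  have -> : tdot T (et i) = T i.
    rewrite /tdot (bigD1 i) //= big1 => [|x nx].
      by rewrite ffunE eqxx mulr1 addr0.
    by rewrite ffunE (negbTE nx) mulr0.
  apply => x; rewrite ffunE; case: eqP => // ->.
  by rewrite Ui.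
move=> H V HV; rewrite /tdot big1 // => x _.
by case: (boolP (insupp U x)) => Ux; [rewrite H // mul0r | rewrite HV // mulr0].
Qed.


Lemma quad (P : tensor R K S) j :
  (forall i i', P i != 0 -> P i' != 0 -> Fnet i j = Fnet i' j -> i = i') ->
  \sum_r (A P r j)^+2 = \sum_i P i ^+ 2.
Proof.
move=> D.
under eq_bigr do rewrite A_entry expr2 big_distrlr /=.
rewrite exchange_big /=; apply: eq_bigr => i _.
rewrite exchange_big /= (bigD1 i) //= [X in _ + X]big1; last first.
  move=> i' ni'; apply: big1 => r _.
  have [->|pi] := eqVneq (P i) 0; first by rewrite !mul0r.
  have [->|pi'] := eqVneq (P i') 0; first by rewrite mul0r mulr0.
  case: eqP => [er|_]; last by rewrite mulr0 mul0r.
  case: eqP => [er'|_]; last by rewrite !mulr0.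
  by move: ni'; rewrite (D _ _ pi pi' (etrans (esym er) er')) eqxx.
rewrite addr0 (bigD1 (Fnet i j)) //= eqxx !mulr1 big1 ?addr0 ?expr2 //.
by move=> r nr; rewrite (negbTE nr) mulr0 mul0r.
Qed.

End Help.

Theorem proposition3 (R : rcfType) (K S N : nat) (Se : 'I_K -> {set 'I_N})
    (M : {set supp K S}) (A : {linear tensor R K S -> 'M[R]_N}) :
  (0 < N)%N ->
  (forall k, #|Se k| = S) ->
  (forall h : 'M[R]_(S, K), A (segre h) = net Se h) ->
  (forall Sp Sp', Sp \in M -> Sp' \in M ->
     forall i j, net Se (indic R (suppU Sp Sp')) i j \in [:: 0; 1]) ->
  [/\ (forall Sp Sp', Sp \in M -> Sp' \in M ->
         forall T, kerAS A (suppU Sp Sp') T <-> orthC (TS (suppU Sp Sp')) T),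
      deep_NSP A M 1 None
    & deep_lower_RIP A M (Num.sqrt N%:R)].
Proof.
move=> HN HS HA H4.
have D Sp Sp' : Sp \in M -> Sp' \in M -> forall i i' j,
    insupp (suppU Sp Sp') i -> insupp (suppU Sp Sp') i' ->
    Fnet Se HN i j = Fnet Se HN i' j -> i = i'.
  by move=> h h'; exact: (disj (HN:=HN) HS HA (H4 _ _ h h')).
have KC Sp Sp' (h : Sp \in M) (h' : Sp' \in M) T :
    kerAS A (suppU Sp Sp') T <-> (forall i, insupp (suppU Sp Sp') i -> T i = 0).
  exact: (ker_char (HN:=HN) HS HA T (D _ _ h h')).
split.
- move=> Sp Sp' h h' T.
  exact: (iff_trans (KC _ _ h h' T) (iff_sym (orth_char _ _))).
- move=> Sp Sp' h h' T _ _ T' /(KC _ _ h h') HT'.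
  have -> : projS (suppU Sp Sp') T' = 0.
    by apply/ffunP => x; rewrite !ffunE; case: ifP => // Ux; rewrite HT'.
  by rewrite subr0 mul1r.
split; first by rewrite sqrtr_gt0 ltr0n.
move=> Sp Sp' h h' T _.
set P := projS (suppU Sp Sp') T.
have Q j : \sum_r A P r j ^+ 2 = \sum_i P i ^+ 2.
  apply: (quad (HN:=HN) HS HA) => i i' pi pi'; apply: (D _ _ h h').
    by move: pi; rewrite /P ffunE; case: ifP => // _; rewrite eqxx.
  by move: pi'; rewrite /P ffunE; case: ifP => // _; rewrite eqxx.
rewrite /mxnorm /AS -/P /tnorm exchange_big /=.
under eq_bigr do rewrite Q.
rewrite sumr_const card_ord.
have -> : \sum_i P i ^+ 2 = tdot P P by apply: eq_bigr => i _; rewrite expr2.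
have -> : tdot P P *+ N = N%:R * tdot P P by rewrite mulr_natl.
by rewrite sqrtrM ?ler0n.
Qed.
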